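(* Let $\mathbb K$ be a field with $2\in\mathbb K^\times$, $A$ a unital commutative associative $\mathbb K$-algebra, and $\mathfrak k$ a $\mathbb K$-Lie algebra with $H^1(\mathfrak k,\mathfrak k^* )=\{0\}$. Then $\mathfrak g=A\otimes\mathfrak k$ has no coupled cocycles.
   Context: $\mathfrak k^*$ is the coadjoint module, $(x.\lambda)(y)=-\lambda([x,y])$, and $H^1(\mathfrak k,\mathfrak k^* )$ is Chevalley–Eilenberg cohomology. $\mathfrak g$ has bracket $[a\otimes x,a'\otimes x']=aa'\otimes[x,x']$, $ax=a\otimes x$, unit $\mathbf 1$. $v\wedge w=\tfrac12(v\otimes w-w\otimes v)$, $v\vee w=\tfrac12(v\otimes w+w\otimes v)$; $I_A$ is the kernel of multiplication $S^2(A)\to A$. $p_1(ax\wedge by)=a\wedge b\otimes x\vee y$, $p_2(ax\wedge by)=ab\otimes x\wedge y$, $p_3(ax\wedge by)=(a\vee b-ab\vee\mathbf 1)\otimes x\wedge y$ give an isomorphism $\Lambda^2(\mathfrak g)\cong(\Lambda^2(A)\otimes S^2(\mathfrak k))\oplus(A\otimes\Lambda^2(\mathfrak k))\oplus(I_A\otimes\Lambda^2(\mathfrak k))$, so each linear $f:\Lambda^2(\mathfrak g)\to\mathfrak z$ is uniquely $f_1\circ p_1+f_2\circ p_2+f_3\circ p_3$. A 2-cocycle is such an $f$ vanishing on the span of $[u,v]\wedge w+[v,w]\wedge u+[w,u]\wedge v$. A coupled cocycle is a $\mathfrak z$-valued 2-cocycle, for some vector space $\mathfrak z$, with $f_3=0$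 such that $f_1\circ p_1$ is not a 2-cocycle. *)

(* Defs.v *)
From HB Require Import structures.
From mathcomp Require Import all_boot all_algebra.
Set Implicit Arguments. Unset Strict Implicit. Unset Printing Implicit Defensive.
Import GRing.Theory.
Local Open Scope ring_scope.

Definition lin (K : fieldType) (U V : lmodType K) (f : U -> V) : Prop :=
  forall (r : K) (u u' : U), f (r *: u + u') = r *: f u + f u'.

Definition lin_form (K : fieldType) (U : lmodType K) (f : U -> K) : Prop :=
  forall (r : K) (u u' : U), f (r *: u + u') = r * f u + f u'.

Definition lie_bracket (K : fieldType) (k : lmodType K) (br : k -> k -> k) : Prop :=
  [/\ forall y, lin (fun x => br x y),
      forall x, lin (br x),
      forall x, br x x = 0
    & forall x y w, br x (br y w) + br y (br w x) + br w (br x y) = 0].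

(* H^1(k, k^* ) = 0 for the coadjoint module (x.l)(y) = - l([x,y]).
   A 1-cochain D : k -> k^* is encoded (currying k^* = linear forms on k)
   as the bilinear map (x, w) |-> D(x)(w).
   1-cocycle:  D([x,y]) = x.D(y) - y.D(x),  i.e.
               D([x,y])(w) = - D(y)([x,w]) + D(x)([y,w]).
   1-coboundary: D(x) = x.l for some l in k^*, i.e. D(x)(w) = - l([x,w]). *)
Definition H1_coadjoint_trivial (K : fieldType) (k : lmodType K)
    (br : k -> k -> k) : Prop :=
  forall D : k -> k -> K,
    (forall x, lin_form (D x)) ->
    (forall w, lin_form (fun x => D x w)) ->
    (forall x y w, D (br x y) w = - D y (br x w) + D x (br y w)) ->
    exists l : k -> K, lin_form l /\ forall x w, D x w = - l (br x w).

(* A linear map f1 : Lambda^2(A) (x) S^2(k) -> z, encoded by the multilinear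
   map phi(a,b,x,y) = f1(a /\ b (x) x \/ y): linear in each argument,
   antisymmetric in (a,b), symmetric in (x,y). *)
Definition f1_data (K : fieldType) (A : comAlgType K) (k z : lmodType K)
    (phi : A -> A -> k -> k -> z) : Prop :=
  (forall b x y, lin (fun a => phi a b x y)) /\
  (forall a x y, lin (fun b => phi a b x y)) /\
  (forall a b y, lin (fun x => phi a b x y)) /\
  (forall a b x, lin (fun y => phi a b x y)) /\
  (forall a b x y, phi b a x y = - phi a b x y) /\
  (forall a b x y, phi a b y x = phi a b x y).

(* A linear map f2 : A (x) Lambda^2(k) -> z, encoded by the multilinear map
   psi(a,x,y) = f2(a (x) x /\ y): linear in each argument, antisymmetric
   in (x,y). *)
Definition f2_data (K : fieldType) (A : comAlgType K) (k z : lmodType K)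
    (psi : A -> k -> k -> z) : Prop :=
  [/\ forall x y, lin (fun a => psi a x y),
      forall a y, lin (fun x => psi a x y),
      forall a x, lin (fun y => psi a x y)
    & forall a x y, psi a y x = - psi a x y].

(* A linear f : Lambda^2(g) -> z, g = A (x) k, is determined by its values
   F a b x y = f(ax /\ by) on wedges of pure tensors.  Since
   (u,v,w) |-> [u,v]/\w + [v,w]/\u + [w,u]/\v is trilinear and g is spanned
   by pure tensors, f is a 2-cocycle iff it vanishes on these elements for
   pure tensors u = ax, v = by, w = cw; with [ax,by] = ab [x,y]. *)
Definition two_cocycle (K : fieldType) (A : comAlgType K) (k z : lmodType K)
    (br : k -> k -> k) (F : A -> A -> k -> k -> z) : Prop :=
  forall (a b c : A) (x y w : k),
    F (a * b) c (br x y) w + F (b * c) a (br y w) x + F (c * a) b (br w x) y = 0.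

(* f = f1 o p1 + f2 o p2 (+ f3 o p3 with f3 = 0), with
   f(ax /\ by) = f1(a/\b (x) x\/y) + f2(ab (x) x/\y).
   Coupled cocycle: f is a 2-cocycle, f3 = 0, and f1 o p1 is not a 2-cocycle. *)
Definition coupled_cocycle (K : fieldType) (A : comAlgType K) (k z : lmodType K)
    (br : k -> k -> k) (phi : A -> A -> k -> k -> z) (psi : A -> k -> k -> z)
    : Prop :=
  two_cocycle br (fun a b x y => phi a b x y + psi (a * b) x y)
  /\ ~ two_cocycle br phi.

(* Main.v *)
Require Import Defs.
From HB Require Import structures.
From mathcomp Require Import all_boot all_algebra.
From mathcomp Require Import boolp classical_sets.
Set Implicit Arguments. Unset Strict Implicit.
Import GRing.Theory.
Local Open Scope ring_scope.
Local Open Scope classical_set_scope.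

Section L.
Variables (K : fieldType) (U V : lmodType K) (g : U -> V).
Hypothesis hg : lin g.
Lemma linD u u' : g (u + u') = g u + g u'.
Proof. by rewrite -{1}[u]scale1r hg scale1r. Qed.
Lemma lin0 : g 0 = 0.
Proof. by apply: (addrI (g 0)); rewrite addr0 -linD addr0. Qed.
Lemma linN u : g (- u) = - g u.
Proof. by rewrite -scaleN1r -[_ *: u]addr0 hg lin0 addr0 scaleN1r. Qed.
End L.

Section LF.
Variables (K : fieldType) (U : lmodType K) (g : U -> K).
Hypothesis hg : lin_form g.
Lemma lfD u u' : g (u + u') = g u + g u'.
Proof. by rewrite -{1}[u]scale1r hg mul1r. Qed.
Lemma lf0 : g 0 = 0.
Proof. by apply: (addrI (g 0)); rewrite addr0 -lfD addr0. Qed.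
Lemma lfN u : g (- u) = - g u.
Proof. by rewrite -scaleN1r -[_ *: u]addr0 hg lf0 addr0 mulN1r. Qed.
End LF.

Lemma two_vec (K : fieldType) (V : lmodType K) (v : V) :
  (2%:R : K) != 0 -> v + v = 0 -> v = 0.
Proof.
move=> h2 e; rewrite -[v]scale1r -(mulVf h2) -scalerA.
by rewrite scaler_nat [v *+ 2]mulr2n e scaler0.
Qed.
Lemma sep (K : fieldType) (z : lmodType K) (v : z) :
  v != 0 -> exists f : z -> K, lin_form f /\ f v = 1.
Proof.
move=> v0.
pose P := fun M : set z => (forall r u u', M u -> M u' -> M (r *: u + u')) /\ ~ M v.
have [M [[Mcl Mv] Mmax]] : exists A, P A /\ forall B, A `<` B -> ~ P B.
  apply: Zorn_bigcup => F FP Ftot; split.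
    move=> r u u' [X FX Xu] [Y FY Yu'].
    have [XY|YX] := Ftot _ _ FX FY.
      by exists Y => //; apply: (FP _ FY).1 => //; apply: XY.
    by exists X => //; apply: (FP _ FX).1 => //; apply: YX.
  by move=> [X FX Xv]; apply: (FP _ FX).2.
have M0 : M 0.
  apply: contrapT => nM0.
  apply: (Mmax (M `|` [set 0])).
    split; first by move=> x Mx; left.
    by move=> /(_ 0 (or_intror erefl)).
  split; last by case => // /eqP; rewrite (negbTE v0).
  move=> r u u' [Mu|->] [Mu'|->].
  - by left; apply: Mcl.
  - left; rewrite addr0.
    have -> : r *: u = (r - 1) *: u + u by rewrite scalerBl scale1r subrK.
    by apply: Mcl.
  - by left; rewrite scaler0 add0r.
  - by right; rewrite scaler0 addr0.
have MN : forall u, M u -> M (- u).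
  by move=> u Mu; rewrite -scaleN1r -[_ *: u]addr0; apply: Mcl.
have MD : forall u u', M u -> M u' -> M (u + u').
  by move=> u u' Mu Mu'; rewrite -[u]scale1r; apply: Mcl.
have dec : forall u, exists t, exists m, M m /\ u = m + t *: v.
  move=> u; apply: contrapT => nd.
  pose B := fun y => exists m t, M m /\ y = m + t *: u.
  apply: (Mmax B).
    split; first by move=> y My; exists y, 0; rewrite scale0r addr0.
    move=> /(_ u) BM; apply: nd; exists 0, u; rewrite scale0r addr0; split => //.
    by apply: BM; exists 0, 1; rewrite scale1r add0r.
  split.
    move=> r y y' [m [t [Mm ->]]] [m' [t' [Mm' ->]]].
    exists (r *: m + m'), (r * t + t'); split; first by apply: Mcl.
    by rewrite scalerDr scalerDl scalerA addrACA.
  move=> [m [t [Mm vE]]].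
  have [t0|tn0] := eqVneq t 0.
    by apply: Mv; rewrite vE t0 scale0r addr0.
  apply: nd; exists t^-1, (- (t^-1 *: m)); split.
    by apply: MN; rewrite -[_ *: m]addr0; apply: Mcl.
  by rewrite vE scalerDr scalerA mulVf // scale1r addKr.
have uniq : forall t t' m m', M m -> M m' -> m + t *: v = m' + t' *: v -> t = t'.
  move=> t t' m m' Mm Mm' E; apply: contrapT => tt.
  have : t - t' != 0 by rewrite subr_eq0; apply/eqP.
  move=> d; apply: Mv.
  have -> : v = (t - t')^-1 *: (m' - m).
    apply: (scalerI d); rewrite scalerA mulfV // scale1r scalerBl.
    apply: (addrI (m + t' *: v)).
    by rewrite -addrA [t' *: v + _]addrC subrK E [RHS]addrC addrA subrK.
  by rewrite -[_ *: (m' - m)]addr0; apply: Mcl => //; apply: MD => //; apply: MN.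
have [f fP] := choice dec.
exists f; split.
  move=> r u u'.
  have [m [Mm uE]] := fP u; have [m' [Mm' uE']] := fP u'.
  have [m'' [Mm'' uE'']] := fP (r *: u + u').
  apply: (uniq _ _ m'' (r *: m + m')) => //; first by apply: Mcl.
  by rewrite -uE'' {1}uE {1}uE' scalerDr scalerDl scalerA addrACA.
have [m [Mm vE]] := fP v.
apply: (uniq _ _ m 0) => //; by rewrite -vE add0r scale1r.
Qed.
From mathcomp Require Import ring.
Lemma forms_zero (K : fieldType) (z : lmodType K) (w : z) :
  (forall f : z -> K, lin_form f -> f w = 0) -> w = 0.
Proof.
case: (eqVneq w 0) => // /sep [f [hf fw]] /(_ f hf).
by rewrite fw => /eqP; rewrite oner_eq0.
Qed.

Theorem corollary3p8 (K : fieldType) (A : comAlgType K) (k : lmodType K)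
    (br : k -> k -> k) :
  (2%:R : K) != 0 ->
  lie_bracket br ->
  H1_coadjoint_trivial br ->
  forall (z : lmodType K) (phi : A -> A -> k -> k -> z) (psi : A -> k -> k -> z),
    f1_data phi -> f2_data psi -> ~ coupled_cocycle br phi psi.
Proof.
move=> h2 [brl brr brxx _] H1 z phi psi [pa [pb [px [py [pasym psym]]]]]
  [qa qx qy qasym] [Hcoc Hnot]; apply: Hnot.
have brN x y : br y x = - br x y.
  have := brxx (x + y).
  rewrite (linD (brl _)) !(linD (brr _)) !brxx add0r addr0 => /eqP.
  by rewrite addr_eq0 => /eqP ->; rewrite opprK.
move=> a0 b0 c0 x0 y0 w0; apply: forms_zero => f hf.
pose Ph a b x y := f (phi a b x y).
pose Ps d x y := f (psi d x y).
have PhN1 a b u y : Ph a b (- u) y = - Ph a b u y.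
  by rewrite /Ph (linN (px a b y)) (lfN hf).
have PhN2 a b x u : Ph a b x (- u) = - Ph a b x u.
  by rewrite /Ph (linN (py a b x)) (lfN hf).
have PsN1 d u y : Ps d (- u) y = - Ps d u y.
  by rewrite /Ps (linN (qx d y)) (lfN hf).
have PsN2 d x u : Ps d x (- u) = - Ps d x u.
  by rewrite /Ps (linN (qy d x)) (lfN hf).
have PhA a b x y : Ph b a x y = - Ph a b x y by rewrite /Ph pasym (lfN hf).
have PhS a b x y : Ph a b y x = Ph a b x y by rewrite /Ph psym.
have PsA d x y : Ps d y x = - Ps d x y by rewrite /Ps qasym (lfN hf).
have Cf a b c x y w : Ph (a * b) c (br x y) w + Ph (b * c) a (br y w) x
    + Ph (c * a) b (br w x) y + (Ps (a * b * c) (br x y) w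
    + Ps (a * b * c) (br y w) x + Ps (a * b * c) (br w x) y) = 0.
  have := Hcoc a b c x y w => /= /(congr1 f); rewrite !(lfD hf) (lf0 hf).
  have -> : b * c * a = a * b * c by ring.
  have -> : c * a * b = a * b * c by ring.
  rewrite -/(Ph _ _ _ _) -/(Ps _ _ _).
  move=> <-; rewrite /Ph /Ps; ring.
have Inv a b x y w : Ph a b (br w x) y = Ph a b (br y w) x.
  have E1 := Cf a b 1 x y w.
  have E2 := Cf a b 1 y x w.
  rewrite !mulr1 !mul1r in E1 E2.
  rewrite (brN x y) (brN w x) (brN y w) in E2.
  rewrite !PhN1 !PsN1 [Ph b a _ _]PhA [Ph b a _ _]PhA in E1 E2.
  have : (Ph a b (br w x) y - Ph a b (br y w) x) * 2%:R = 0.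
    rewrite -[RHS](addr0 0) -{1}E1 -E2; ring.
  by move/eqP; rewrite mulf_eq0 (negbTE h2) orbF subr_eq0 => /eqP.
have Psi d x y w : Ps d (br x y) w + Ps d (br y w) x + Ps d (br w x) y
    = Ph 1 d (br x y) w.
  have E := Cf 1 d 1 x y w.
  rewrite !mulr1 !mul1r [Ph d 1 _ _]PhA [Ph d 1 _ _]PhA in E.
  rewrite (Inv 1 d y w x) (Inv 1 d x y w) in E *.
  apply/eqP; rewrite -subr_eq0; apply/eqP; rewrite -E; ring.
have P0 d u v : Ph 1 d u v = 0.
  pose D x w := Ph 1 d x w + Ps d x w.
  have lD1 x : lin_form (D x).
    move=> r u1 u2; rewrite /D /Ph /Ps (py 1 d x) (qy d x) !hf; ring.
  have lD2 w : lin_form (fun x => D x w).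
    move=> r u1 u2; rewrite /D /Ph /Ps (px 1 d w) (qx d w) !hf; ring.
  have cD x y w : D (br x y) w = - D y (br x w) + D x (br y w).
    rewrite /D (PhS 1 d (br x w) y) (PhS 1 d (br y w) x).
    rewrite (PsA d (br x w) y) (PsA d (br y w) x) (brN w x) PhN1 PsN1.
    have Hps := Psi d x y w.
    rewrite (Inv 1 d y w x) (Inv 1 d x y w) in Hps *.
    rewrite -Hps; ring.
  have [l [hl Dl]] := H1 D lD1 lD2 cD.
  have E1 := Dl u v; have E2 := Dl v u; rewrite /D in E1 E2.
  rewrite (PhS 1 d u v) (PsA d u v) (brN u v) (lfN hl) in E2.
  have e : Ph 1 d u v * 2%:R = 0.
    transitivity ((Ph 1 d u v + Ps d u v) + (Ph 1 d u v - Ps d u v)); first by ring.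
    by rewrite E1 E2 opprK addNr.
  by move/eqP: e; rewrite mulf_eq0 (negbTE h2) orbF => /eqP.
rewrite !(lfD hf).
have := Cf a0 b0 c0 x0 y0 w0.
by rewrite (Psi (a0 * b0 * c0) x0 y0 w0) P0 addr0.
Qed.
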